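(* Let $(R,\mathfrak{m})$ be a local perinormal domain. If $S$ is an integral overring of $R$ such that the induced map $\operatorname{Spec} S \to \operatorname{Spec} R$ is a bijection, then $S = R$.
   Context: All rings are commutative with identity; ''local'' means having a unique maximal ideal; an overring of a domain $R$ is a ring between $R$ and its fraction field. A ring extension $A \subseteq B$ satisfies going-down if whenever $\mathfrak{p} \subset \mathfrak{q}$ are primes of $A$ and $Q$ is a prime of $B$ with $Q \cap A = \mathfrak{q}$, there is a prime $P \subseteq Q$ of $B$ with $P \cap A = \mathfrak{p}$. A domain $R$ is perinormal if every local overring $S$ of $R$ such that $R \subseteq S$ satisfies going-down is a localization of $R$. *)

(* Defs.v *)
From mathcomp Require Import all_boot all_algebra.
Set Implicit Arguments. Unset Strict Implicit. Unset Printing Implicit Defensive.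
Import GRing.Theory.
Local Open Scope ring_scope.

(* Convention: all rings considered are subrings of a fixed field K, given as
   Prop-valued predicates on K.  A domain R is modelled as a subring of K such
   that K is the fraction field of R; overrings of R are then subrings of K
   containing R. *)

Section Defs.
Variable K : fieldType.

Definition subring (A : K -> Prop) : Prop :=
  [/\ A 0, A 1, (forall x y, A x -> A y -> A (x - y))
    & (forall x y, A x -> A y -> A (x * y))].

Definition is_frac_field_of (R : K -> Prop) : Prop :=
  forall z : K, exists a b, [/\ R a, R b, b != 0 & z = a / b].

Definition ideal_of (A I : K -> Prop) : Prop :=
  [/\ (forall x, I x -> A x), I 0, (forall x y, I x -> I y -> I (x + y))
    & (forall a x, A a -> I x -> I (a * x))].

Definition prime_of (A P : K -> Prop) : Prop :=
  [/\ ideal_of A P, ~ P 1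
    & (forall x y, A x -> A y -> P (x * y) -> P x \/ P y)].

Definition maximal_of (A M : K -> Prop) : Prop :=
  [/\ ideal_of A M, ~ M 1
    & (forall I, ideal_of A I -> ~ I 1 -> (forall x, M x -> I x) ->
        forall x, I x -> M x)].

Definition local_ring (A : K -> Prop) : Prop :=
  exists M, maximal_of A M /\
    forall N, maximal_of A N -> forall x, N x <-> M x.

Definition overring (R S : K -> Prop) : Prop :=
  subring S /\ (forall x, R x -> S x).

(* going-down for A ⊆ B; contraction Q ∩ A is expressed via A x -> (Q x <-> q x) *)
Definition going_down (A B : K -> Prop) : Prop :=
  forall p q Q : K -> Prop,
    prime_of A p -> prime_of A q -> (forall x, p x -> q x) ->
    prime_of B Q -> (forall x, A x -> (Q x <-> q x)) ->
    exists P : K -> Prop, [/\ prime_of B P, (forall x, P x -> Q x)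
                            & (forall x, A x -> (P x <-> p x))].

Definition is_localization_of (R S : K -> Prop) : Prop :=
  exists T : K -> Prop,
    [/\ (forall t, T t -> R t /\ t != 0), T 1,
        (forall s t, T s -> T t -> T (s * t))
      & (forall z, S z <-> exists a t, [/\ R a, T t & z = a / t])].

Definition perinormal (R : K -> Prop) : Prop :=
  forall S : K -> Prop, overring R S -> local_ring S -> going_down R S ->
    is_localization_of R S.

Definition integral_over (R S : K -> Prop) : Prop :=
  forall s, S s -> exists p : {poly K},
    [/\ p \is monic, (forall i, R p`_i) & root p s].

Definition spec_map_bijective (R S : K -> Prop) : Prop :=
  (forall Q1 Q2, prime_of S Q1 -> prime_of S Q2 ->
     (forall x, R x -> (Q1 x <-> Q2 x)) -> forall x, Q1 x <-> Q2 x) /\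
  (forall p, prime_of R p ->
     exists Q, prime_of S Q /\ forall x, R x -> (Q x <-> p x)).

End Defs.

(* Main.v *)
Require Import Defs.
From mathcomp Require Import all_boot all_algebra.
From mathcomp Require Import boolp classical_sets.
From mathcomp Require Import ring.
Set Implicit Arguments. Unset Strict Implicit. Unset Printing Implicit Defensive.
Import GRing.Theory.
Local Open Scope ring_scope.

Section Aux.
Variable K : fieldType.
Implicit Types A I J : K -> Prop.

Lemma sr_opp A x : subring A -> A x -> A (- x).
Proof. by case=> A0 _ AB _ Ax; rewrite -sub0r; apply: AB. Qed.

Lemma sr_add A x y : subring A -> A x -> A y -> A (x + y).
Proof.
move=> sA Ax Ay; case: (sA) => _ _ AB _.
by rewrite -(opprK y); apply: AB => //; apply: sr_opp.
Qed.

Lemma sr_mul A x y : subring A -> A x -> A y -> A (x * y).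
Proof. by case=> _ _ _ AM; apply: AM. Qed.

Lemma sr_exp A x n : subring A -> A x -> A (x ^+ n).
Proof.
move=> sA Ax; elim: n => [|n IH]; first by case: sA.
by rewrite exprS; apply: sr_mul.
Qed.

Lemma sr_sum A n (F : 'I_n -> K) : subring A -> (forall i, A (F i)) ->
  A (\sum_(i < n) F i).
Proof.
move=> sA HF; apply: (big_ind A).
- by case: sA.
- by move=> x y; apply: (sr_add sA).
- by move=> i _; apply: HF.
Qed.

Lemma id_sub A I x : ideal_of A I -> I x -> A x.
Proof. by case=> H _ _ _; apply: H. Qed.

Lemma id_add A I x y : ideal_of A I -> I x -> I y -> I (x + y).
Proof. by case=> _ _ H _; apply: H. Qed.

Lemma id_mull A I a x : ideal_of A I -> A a -> I x -> I (a * x).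
Proof. by case=> _ _ _ H; apply: H. Qed.

Lemma id_mulr A I a x : ideal_of A I -> A a -> I x -> I (x * a).
Proof. by move=> iI Aa Ix; rewrite mulrC; apply: (id_mull iI Aa Ix). Qed.

Lemma id_opp A I x : subring A -> ideal_of A I -> I x -> I (- x).
Proof.
move=> sA iI Ix; rewrite -mulN1r; apply: (id_mull iI _ Ix).
by apply: sr_opp => //; case: sA.
Qed.

Lemma id_subr A I x y : subring A -> ideal_of A I -> I x -> I y -> I (x - y).
Proof. by move=> sA iI Ix Iy; apply: (id_add iI Ix); apply: (id_opp sA iI). Qed.

Lemma id_sum A I n (F : 'I_n -> K) : ideal_of A I -> (forall i, I (F i)) ->
  I (\sum_(i < n) F i).
Proof.
move=> iI HF; apply: (big_ind I).
- by case: iI.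
- by move=> x y; apply: (id_add iI).
- by move=> i _; apply: HF.
Qed.

Lemma prime_exp A P x n : prime_of A P -> subring A -> A x -> P (x ^+ n) -> P x.
Proof.
move=> [iP P1 Pm] sA Ax; elim: n => [|n IH]; first by rewrite expr0.
rewrite exprS => H; case: (Pm _ _ Ax (sr_exp n sA Ax) H) => //; exact: IH.
Qed.

Lemma id_pow A J a b n : subring A -> ideal_of A J -> A a -> A b -> J (a - b) ->
  J (a ^+ n - b ^+ n).
Proof.
move=> sA iJ Aa Ab Jab; elim: n => [|n IH]; first by rewrite subrr; case: iJ.
have -> : a ^+ n.+1 - b ^+ n.+1 = a * (a ^+ n - b ^+ n) + b ^+ n * (a - b).
  by rewrite !exprS; ring.
apply: (id_add iJ); apply: (id_mull iJ) => //; exact: sr_exp.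
Qed.

Definition addid A J x := fun z => exists j a, [/\ J j, A a & z = j + a * x].

Lemma addid_ideal A J x : subring A -> ideal_of A J -> A x -> ideal_of A (addid A J x).
Proof.
move=> sA iJ Ax; split.
- move=> z [j [a [Jj Aa ->]]]; apply: sr_add => //; first exact: (id_sub iJ Jj).
  exact: sr_mul.
- exists 0, 0; split => //; [by case: iJ | by case: sA | by rewrite mul0r addr0].
- move=> z1 z2 [j1 [a1 [J1 A1 ->]]] [j2 [a2 [J2 A2 ->]]].
  exists (j1 + j2), (a1 + a2); split; [exact: (id_add iJ J1 J2)|exact: sr_add|ring].
- move=> b z Ab [j [a [Jj Aa ->]]]; exists (b * j), (b * a); split.
  + exact: (id_mull iJ Ab Jj).
  + exact: sr_mul.
  + ring.
Qed.

Lemma addid_in A J x : subring A -> ideal_of A J -> addid A J x x.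
Proof. by move=> sA iJ; exists 0, 1; split; [case: iJ|case: sA|ring]. Qed.

Lemma addid_sup A J x y : subring A -> J y -> addid A J x y.
Proof. by move=> sA Jy; exists y, 0; split; [|case: sA|ring]. Qed.

Lemma ZL A I (T : K -> Prop) : subring A -> ideal_of A I -> (forall x, I x -> ~ T x) ->
 exists J, [/\ ideal_of A J, (forall x, I x -> J x), (forall x, J x -> ~ T x) &
   (forall J', ideal_of A J' -> (forall x, J' x -> ~ T x) -> (forall x, J x -> J' x) ->
      forall x, J' x -> J x)].
Proof.
move=> sA iI IT.
pose good (X : set K) := [/\ ideal_of A X, (forall x, I x -> X x) & (forall x, X x -> ~ T x)].
pose P (X : set K) := (forall x, ~ X x) \/ good X.
have [J [PJ Jmax]] : exists J, P J /\ forall B, (J `<` B)%classic -> ~ P B.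
  apply: Zorn_bigcup => F FP Ftot.
  case: (pselect (exists X, F X /\ good X)) => [[X0 [FX0 gX0]]|nog].
  - right.
    have key : forall X x, F X -> X x -> good X.
      move=> X x FX Xx; case: (FP X FX) => // H; by case: (H x).
    split.
    + split.
      * move=> x [X FX Xx]; have [[H _ _ _] _ _] := key X x FX Xx; exact: H.
      * exists X0 => //; by case: gX0 => [[]].
      * move=> x y [X FX Xx] [Y FY Yy]; case: (Ftot X Y FX FY) => XY.
        -- exists Y => //; have [iY _ _] := key Y y FY Yy; apply: (id_add iY) => //; exact: XY.
        -- exists X => //; have [iX _ _] := key X x FX Xx; apply: (id_add iX) => //; exact: XY.
      * move=> a x Aa [X FX Xx]; exists X => //; have [iX _ _] := key X x FX Xx; exact: (id_mull iX).
    + move=> x Ix; exists X0 => //; by case: gX0 => _ H _; apply: H.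
    + move=> x [X FX Xx]; have [_ _ H] := key X x FX Xx; exact: H.
  - left => x [X FX Xx]; apply: nog; exists X; split => //; case: (FP X FX) => // H; by case: (H x).
case: PJ => [J0|gJ].
  exfalso; apply: (Jmax I); last by right; split.
  split; first by move=> x /J0.
  move=> H; apply: (J0 0); apply: H; by case: iI.
exists J; case: gJ => iJ IJ JT; split => // J' iJ' J'T JJ' x J'x.
apply: contrapT => nJx; apply: (Jmax J'); last by right; split => // y /IJ /JJ'.
split => // H; exact: nJx (H x J'x).
Qed.

Lemma max_prime A J (T : K -> Prop) : subring A -> T 1 -> (forall s t, T s -> T t -> T (s*t)) ->
  ideal_of A J -> (forall x, J x -> ~ T x) ->
  (forall J', ideal_of A J' -> (forall x, J' x -> ~ T x) -> (forall x, J x -> J' x) ->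
     forall x, J' x -> J x) ->
  prime_of A J.
Proof.
move=> sA T1 Tm iJ JT Jmax; split => //; first by move=> /JT; apply.
move=> x y Ax Ay Jxy; apply: contrapT => /not_orP [nx ny].
have ext : forall z, A z -> ~ J z -> exists t, addid A J z t /\ T t.
  move=> z Az nz; apply: contrapT => H; apply: nz.
  apply: (Jmax _ (addid_ideal sA iJ Az)).
  - move=> t Jt Tt; apply: H; by exists t.
  - by move=> t Jt; apply: addid_sup.
  - exact: addid_in.
have [t1 [[j1 [a1 [J1 A1 E1]]] T1']] := ext x Ax nx.
have [t2 [[j2 [a2 [J2 A2 E2]]] T2']] := ext y Ay ny.
apply: (JT _ _ (Tm _ _ T1' T2')); rewrite E1 E2.
have -> : (j1 + a1 * x) * (j2 + a2 * y) =
   j1 * (j2 + a2 * y) + (a1 * x) * j2 + (a1 * a2) * (x * y) by ring.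
have Aj2 : A (j2 + a2 * y).
  by apply: sr_add => //; [exact: (id_sub iJ J2) | exact: sr_mul].
apply: (id_add iJ); first apply: (id_add iJ).
- exact: (id_mulr iJ Aj2 J1).
- apply: (id_mull iJ) => //; exact: sr_mul.
- apply: (id_mull iJ) => //; exact: sr_mul.
Qed.

Lemma maxl_prime A M : subring A -> maximal_of A M -> prime_of A M.
Proof.
move=> sA [iM M1 Mmax]; split => // x y Ax Ay Mxy.
apply: contrapT => /not_orP [nx ny].
have : addid A M x 1.
  apply: contrapT => n1; apply: nx; apply: (Mmax _ (addid_ideal sA iM Ax) n1).
  - by move=> z; apply: addid_sup.
  - exact: addid_in.
case=> [j [a [Mj Aa E]]]; apply: ny.
have -> : y = j * y + a * (x * y) by rewrite mulrA -mulrDl -E mul1r.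
apply: (id_add iM); [exact: (id_mulr iM Ay Mj) | exact: (id_mull iM Aa Mxy)].
Qed.

Lemma step1 A M I : subring A ->
  (forall N, maximal_of A N -> forall x, N x <-> M x) -> ideal_of A I -> ~ I 1 ->
  forall x, I x -> M x.
Proof.
move=> sA uniq iI nI1.
have IT : forall x, I x -> ~ (x = 1) by move=> x Ix E; apply: nI1; rewrite -E.
have [J [iJ IJ J1 Jmax]] := ZL sA iI IT.
have mJ : maximal_of A J.
  split => //; first by move=> H; exact: (J1 _ H erefl).
  move=> I' iI' nI' JI'; apply: Jmax => // x I'x E; apply: nI'; by rewrite -E.
by move=> x /IJ Jx; apply/(uniq J mJ).
Qed.

Lemma GU R S q Q I : subring R -> subring S -> (forall x, R x -> S x) -> integral_over R S ->
  (forall Q1 Q2, prime_of S Q1 -> prime_of S Q2 ->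
     (forall x, R x -> (Q1 x <-> Q2 x)) -> forall x, Q1 x <-> Q2 x) ->
  prime_of R q -> prime_of S Q -> (forall x, R x -> (Q x <-> q x)) ->
  ideal_of S I -> (forall x, R x -> I x -> q x) -> forall x, I x -> Q x.
Proof.
move=> sR sS RS integ inj qP QP hQ iI hI.
pose T := fun z => R z /\ ~ q z.
have IT : forall x, I x -> ~ T x by move=> x Ix [Rx nq]; exact: nq (hI x Rx Ix).
have [J [iJ IJ JT Jmax]] := ZL sS iI IT.
have [iq nq1 qm] := qP.
have JP : prime_of S J.
  apply: (max_prime (T:=T)) => //.
  - by split; [case: sR|].
  - move=> s t [Rs ns] [Rt nt]; split; first exact: sr_mul.
    by move=> /(qm _ _ Rs Rt) [].
have hJ : forall x, R x -> (J x <-> q x).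
  move=> y Ry; split.
    by move=> Jy; apply: contrapT => nqy; exact: JT _ Jy (conj Ry nqy).
  move=> qy; apply: contrapT => nJy.
  have Sy := RS y Ry.
  have [t [[j [s [Jj Ss Et]]] [Rt nqt]]] : exists t, addid S J y t /\ T t.
    apply: contrapT => H; apply: nJy.
    apply: (Jmax _ (addid_ideal sS iJ Sy)).
    - move=> t Jt Tt; apply: H; by exists t.
    - by move=> t Jt; apply: addid_sup.
    - exact: addid_in.
  apply: nqt.
  have [p [pm pR pr]] := integ s Ss.
  set n := (size p).-1.
  have sp : size p = n.+1.
    rewrite /n prednK // lt0n size_poly_eq0; exact: monic_neq0.
  pose F := \sum_(i < n.+1) p`_i * (y ^+ (n - i) * t ^+ i).
  have RF : R F.
    apply: sr_sum => // i; apply: sr_mul => //; apply: sr_mul => //; exact: sr_exp.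
  have JF : J F.
    pose G := \sum_(i < n.+1) p`_i * (y ^+ (n - i) * (s * y) ^+ i).
    have G0 : G = 0.
      have : p.[s] = 0 by apply/eqP.
      rewrite horner_coef sp => E.
      rewrite -[RHS](mulr0 (y ^+ n)) -E mulr_sumr; apply: eq_bigr => i _.
      have -> : y ^+ n = y ^+ (n - i) * y ^+ i.
        by rewrite -exprD subnK // -ltnS.
      rewrite exprMn; ring.
    have : J (G - F).
      pose Rl := fun a b => [/\ S a, S b & J (a - b)].
      suff : Rl G F by case.
      apply: (big_ind2 Rl).
      - split; [by case: sS | by case: sS | by rewrite subrr; case: iJ].
      - move=> x1 x2 y1 y2 [S1 S2 J12] [S3 S4 J34]; split; try exact: sr_add.
        have -> : x1 + y1 - (x2 + y2) = (x1 - x2) + (y1 - y2) by ring.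
        exact: (id_add iJ).
      - move=> i _.
        have Spi : S p`_i by apply: RS.
        have Sy' : S (y ^+ (n - i)) by apply: sr_exp.
        have Ssy : S (s * y) by apply: sr_mul.
        have St : S t by apply: RS.
        split.
        + apply: sr_mul => //; apply: sr_mul => //; exact: sr_exp.
        + apply: sr_mul => //; apply: sr_mul => //; exact: sr_exp.
        + have -> : p`_i * (y ^+ (n - i) * (s * y) ^+ i) - p`_i * (y ^+ (n - i) * t ^+ i)
              = (p`_i * y ^+ (n - i)) * ((s * y) ^+ i - t ^+ i) by ring.
          apply: (id_mull iJ); first exact: sr_mul.
          apply: (@id_pow S J (s * y) t i sS iJ Ssy St).
          have -> : s * y - t = - j by rewrite Et; ring.
          exact: (id_opp sS iJ).
    rewrite G0 sub0r => H; rewrite -[F]opprK; exact: (id_opp sS iJ).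
  have qF : q F by apply: contrapT => nqF; exact: JT _ JF (conj RF nqF).
  move: qF; rewrite /F big_ord_recr /= subnn expr0 mul1r.
  have -> : p`_n = 1 by move/monicP: pm; rewrite lead_coefE.
  rewrite mul1r.
  set rest := (\sum_(i < n) _) => qF.
  have qrest : q rest.
    apply: (id_sum iq) => i /=.
    have -> : (n - i = (n - i.+1).+1)%N by rewrite (subnSK (ltn_ord i)).
    rewrite exprS.
    have -> : p`_i * (y * y ^+ (n - i.+1) * t ^+ i) = (p`_i * y ^+ (n - i.+1) * t ^+ i) * y
      by ring.
    apply: (id_mull iq) => //; apply: sr_mul => //; [apply: sr_mul => // | ]; exact: sr_exp.
  have qtn : q (t ^+ n).
    have -> : t ^+ n = (rest + t ^+ n) - rest by ring.
    exact: (id_subr sR iq).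
  exact: (prime_exp qP sR Rt qtn).
have E : forall z, R z -> (J z <-> Q z) by move=> z Rz; rewrite hJ // hQ.
move=> x Ix; apply/(inj J Q JP QP E x); exact: IJ.
Qed.

End Aux.

Theorem proposition3p3 (K : fieldType) (R S : K -> Prop) :
  subring R -> is_frac_field_of R -> local_ring R -> perinormal R ->
  overring R S -> integral_over R S -> spec_map_bijective R S ->
  forall x, S x <-> R x.
Proof.
move=> sR _ [m [mmax muniq]] peri [sS RS] integ [inj surj].
have st1 := step1 sR muniq.
have mP := maxl_prime sR mmax.
have [Qm [QmP hQm]] := surj m mP.
have [iQm nQm1 _] := QmP.
have inQm : forall I, ideal_of S I -> ~ I 1 -> forall x, I x -> Qm x.
  move=> I iI nI1; apply: (GU sR sS RS integ inj mP QmP hQm iI).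
  move=> x Rx Ix; apply: (st1 (fun z => R z /\ I z)) => //.
  - split.
    + by move=> z [].
    + by split; [case: sR | case: iI].
    + by move=> a b [Ra Ia] [Rb Ib]; split; [exact: sr_add | exact: (id_add iI)].
    + move=> a z Ra [Rz Iz]; split; first exact: sr_mul.
      exact: (id_mull iI (RS a Ra) Iz).
  - by case.
have QmMax : maximal_of S Qm.
  split => // I iI nI1 _; exact: inQm.
have locS : local_ring S.
  exists Qm; split => // N [iN nN1 Nmax] x; split.
  - exact: inQm.
  - apply: (Nmax _ iQm nQm1); exact: inQm.
have gd : going_down R S.
  move=> p q Q pP qP pq QP hQ.
  have [P [PP hP]] := surj p pP.
  exists P; split => //.
  have [iP _ _] := PP.
  apply: (GU sR sS RS integ inj qP QP hQ iP).
  move=> z Rz Pz; apply: pq; exact/(hP z Rz).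
have [T [Tnz T1 Tmul hS]] := peri S (conj sS RS) locS gd.
move=> x; split; last exact: RS.
move=> /hS [a [t [Ra Tt ->]]].
have [Rt tnz] := Tnz t Tt.
suff Rti : R t^-1 by rewrite mulrC; apply: sr_mul.
apply: contrapT => nRti.
pose tR := fun z => exists r, R r /\ z = t * r.
have itR : ideal_of R tR.
  split.
  - by move=> z [r [Rr ->]]; apply: sr_mul.
  - by exists 0; split; [case: sR | rewrite mulr0].
  - move=> z1 z2 [r1 [R1 ->]] [r2 [R2 ->]]; exists (r1 + r2); split; [exact: sr_add | ring].
  - move=> b z Rb [r [Rr ->]]; exists (b * r); split; [exact: sr_mul | ring].
have ntR1 : ~ tR 1.
  move=> [r [Rr E]]; apply: nRti.
  have -> : t^-1 = r by rewrite -[t^-1]mulr1 E mulrA mulVf // mul1r.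
  exact: Rr.
have mt : m t by apply: (st1 _ itR ntR1); exists 1; split; [case: sR | rewrite mulr1].
have Qmt : Qm t by apply/(hQm t Rt).
have Sti : S t^-1 by apply/hS; exists 1, t; split => //; [case: sR | rewrite div1r].
apply: nQm1; rewrite -(mulVf tnz); exact: (id_mull iQm Sti Qmt).
Qed.
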